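(* For every integer $n\ge0$, $$J\mathcal{G}_{n+2}^{(3)}-4J\mathcal{G}_{n}^{(3)}=-\frac{1}{7}\left[X_{n}(5\mathbf{A}+\mathbf{B})+X_{n+1}(\mathbf{A}-4\mathbf{B})\right]$$ and $$K\mathcal{G}_{n+2}^{(3)}-4K\mathcal{G}_{n}^{(3)}=-X_{n}(5\mathbf{C}+\mathbf{D})-X_{n+1}(\mathbf{C}-4\mathbf{D}),$$ where $\mathbf{A}=1+2\mathbf{e}_1-3\mathbf{e}_2+\mathbf{e}_3$, $\mathbf{B}=2-3\mathbf{e}_1+\mathbf{e}_2+2\mathbf{e}_3$, $\mathbf{C}=1-2\mathbf{e}_1+\mathbf{e}_2+\mathbf{e}_3$, $\mathbf{D}=-2+\mathbf{e}_1+\mathbf{e}_2-2\mathbf{e}_3$.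
   Context: Fix real numbers $\lambda_1,\lambda_2,\lambda_3$. The algebra $\mathbb{H}_{\lambda_1,\lambda_2,\lambda_3}$ of 3-parameter generalized quaternions is the real associative algebra of elements $\psi_0+\psi_1\mathbf{e}_1+\psi_2\mathbf{e}_2+\psi_3\mathbf{e}_3$ ($\psi_i\in\mathbb{R}$) with $\mathbf{e}_1^2=-\lambda_1\lambda_2$, $\mathbf{e}_2^2=-\lambda_1\lambda_3$, $\mathbf{e}_3^2=-\lambda_2\lambda_3$, $\mathbf{e}_1\mathbf{e}_2=-\mathbf{e}_2\mathbf{e}_1=\lambda_1\mathbf{e}_3$, $\mathbf{e}_1\mathbf{e}_3=-\mathbf{e}_3\mathbf{e}_1=-\lambda_2\mathbf{e}_2$, $\mathbf{e}_2\mathbf{e}_3=-\mathbf{e}_3\mathbf{e}_2=\lambda_3\mathbf{e}_1$. The third-order Jacobsthal numbers are $J_0^{(3)}=0$, $J_1^{(3)}=J_2^{(3)}=1$, $J_n^{(3)}=J_{n-1}^{(3)}+J_{n-2}^{(3)}+2J_{n-3}^{(3)}$ for $n\ge3$; the modified third-order Jacobsthal numbers are $K_0^{(3)}=3$, $K_1^{(3)}=1$, $K_2^{(3)}=3$, $K_n^{(3)}=K_{n-1}^{(3)}+K_{n-2}^{(3)}+2K_{n-3}^{(3)}$ for $n\ge3$. For $n\ge0$ define $J\mathcal{G}_n^{(3)}=J_n^{(3)}+J_{n+1}^{(3)}\mathbf{e}_1+J_{n+2}^{(3)}\mathbf{e}_2+J_{n+3}^{(3)}\mathbf{e}_3$ and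 $K\mathcal{G}_n^{(3)}=K_n^{(3)}+K_{n+1}^{(3)}\mathbf{e}_1+K_{n+2}^{(3)}\mathbf{e}_2+K_{n+3}^{(3)}\mathbf{e}_3$. The integer sequence $X_n$ is defined by $X_n=0,1,-1$ according as $n\equiv0,1,2\pmod 3$. *)

(* Defs.v *)
From mathcomp Require Import all_boot all_order all_algebra.
From mathcomp Require Import reals.
Set Implicit Arguments. Unset Strict Implicit. Unset Printing Implicit Defensive.
Import Order.TTheory GRing.Theory Num.Theory.
Local Open Scope ring_scope.

(*  The algebra H_{l1,l2,l3}: elements psi0 + psi1 e1 + psi2 e2 + psi3 e3.
   The parameters l1 l2 l3 index the type and determine the multiplication.  *)
Record GQ (R : realType) (l1 l2 l3 : R) := mkGQ { q0 : R; q1 : R; q2 : R; q3 : R }.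
Arguments mkGQ {R l1 l2 l3}.

Section Ops.
Variables (R : realType) (l1 l2 l3 : R).
Local Notation H := (GQ l1 l2 l3).

Definition gqadd (p q : H) : H :=
  mkGQ (q0 p + q0 q) (q1 p + q1 q) (q2 p + q2 q) (q3 p + q3 q).
Definition gqscale (c : R) (p : H) : H :=
  mkGQ (c  *  q0 p) (c  *  q1 p) (c  *  q2 p) (c  *  q3 p).
Definition gqsub (p q : H) : H := gqadd p (gqscale (-1) q).
Definition gqreal (a : R) : H := mkGQ a 0 0 0.
Definition e1 : H := mkGQ 0 1 0 0.
Definition e2 : H := mkGQ 0 0 1 0.
Definition e3 : H := mkGQ 0 0 0 1.
(*  multiplication determined by the table in the paper:
   e1^2=-l1 l2, e2^2=-l1 l3, e3^2=-l2 l3, e1e2=-e2e1=l1 e3,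
   e1e3=-e3e1=-l2 e2, e2e3=-e3e2=l3 e1  *)
Definition gqmul (p q : H) : H :=
  let a0 := q0 p in let a1 := q1 p in let a2 := q2 p in let a3 := q3 p in
  let b0 := q0 q in let b1 := q1 q in let b2 := q2 q in let b3 := q3 q in
  mkGQ (a0 * b0 - l1 * l2 * a1 * b1 - l1 * l3 * a2 * b2 - l2 * l3 * a3 * b3)%R
       (a0 * b1 + a1 * b0 + l3 * (a2 * b3 - a3 * b2))%R
       (a0 * b2 + a2 * b0 - l2 * (a1 * b3 - a3 * b1))%R
       (a0 * b3 + a3 * b0 + l1 * (a1 * b2 - a2 * b1))%R.

Definition gqA : H := gqadd (gqreal 1) (gqadd (gqscale 2 e1) (gqadd (gqscale (-3) e2) e3)).
Definition gqB : H := gqadd (gqreal 2) (gqadd (gqscale (-3) e1) (gqadd e2 (gqscale 2 e3))).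
Definition gqC : H := gqadd (gqreal 1) (gqadd (gqscale (-2) e1) (gqadd e2 e3)).
Definition gqD : H := gqadd (gqreal (-2)) (gqadd e1 (gqadd e2 (gqscale (-2) e3))).
End Ops.
Arguments e1 {R l1 l2 l3}. Arguments e2 {R l1 l2 l3}. Arguments e3 {R l1 l2 l3}.
Arguments gqA {R l1 l2 l3}. Arguments gqB {R l1 l2 l3}.
Arguments gqC {R l1 l2 l3}. Arguments gqD {R l1 l2 l3}.

Fixpoint Jac3 (n : nat) : int :=
  match n with
  | 0%N => 0 | 1%N => 1 | 2%N => 1
  | (S ((S ((S k) as k1)) as k2)) => Jac3 k2 + Jac3 k1 + 2  *  Jac3 k
  end.
Fixpoint Kac3 (n : nat) : int :=
  match n with
  | 0%N => 3 | 1%N => 1 | 2%N => 3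
  | (S ((S ((S k) as k1)) as k2)) => Kac3 k2 + Kac3 k1 + 2  *  Kac3 k
  end.

Definition Xseq (n : nat) : int :=
  match (n %% 3)%N with 0%N => 0 | 1%N => 1 | _ => -1 end.

Definition JG (R : realType) (l1 l2 l3 : R) (n : nat) : GQ l1 l2 l3 :=
  gqadd (gqreal _ _ _ (Jac3 n)%:~R) (gqadd (gqscale (Jac3 n.+1)%:~R e1)
    (gqadd (gqscale (Jac3 n.+2)%:~R e2) (gqscale (Jac3 n.+3)%:~R e3))).
Definition KG (R : realType) (l1 l2 l3 : R) (n : nat) : GQ l1 l2 l3 :=
  gqadd (gqreal _ _ _ (Kac3 n)%:~R) (gqadd (gqscale (Kac3 n.+1)%:~R e1)
    (gqadd (gqscale (Kac3 n.+2)%:~R e2) (gqscale (Kac3 n.+3)%:~R e3))).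

Lemma Jac3_test : [:: Jac3 3; Jac3 4; Jac3 5; Kac3 3; Kac3 4] = [:: 2%:Z; 5; 9; 10; 15].
Proof. reflexivity. Qed.

(* Main.v *)
Require Import Defs.
From mathcomp Require Import all_boot all_order all_algebra.
From mathcomp Require Import reals.
From mathcomp Require Import zify ring lra.
Import GRing.Theory Num.Theory.
Local Open Scope ring_scope.

Lemma Xcase (n : nat) :
  [/\ Xseq n = 0, Xseq n.+1 = 1 & Xseq n.+2 = -1] \/
  [/\ Xseq n = 1, Xseq n.+1 = -1 & Xseq n.+2 = 0] \/
  [/\ Xseq n = -1, Xseq n.+1 = 0 & Xseq n.+2 = 1].
Proof.
rewrite /Xseq.
have : [\/ (n %% 3 = 0)%N, (n %% 3 = 1)%N | (n %% 3 = 2)%N].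
  have : (n %% 3 < 3)%N by rewrite ltn_mod.
  case: (n %% 3)%N => [|[|[|k]]] _ //; by [constructor 1|constructor 2|constructor 3].
case => h.
- have -> : (n.+1 %% 3 = 1)%N by lia.
  have -> : (n.+2 %% 3 = 2)%N by lia.
  by rewrite h; left.
- have -> : (n.+1 %% 3 = 2)%N by lia.
  have -> : (n.+2 %% 3 = 0)%N by lia.
  by rewrite h; right; left.
- have -> : (n.+1 %% 3 = 0)%N by lia.
  have -> : (n.+2 %% 3 = 1)%N by lia.
  by rewrite h; right; right.
Qed.

Lemma X3 n : Xseq n.+3 = Xseq n.
Proof. by rewrite /Xseq -addn3 modnDr. Qed.

Lemma Jrel n : Jac3 n.+2 - 4 * Jac3 n = Xseq n.+1 - Xseq n.
Proof.
suff H : forall n, [/\ Jac3 n.+2 - 4 * Jac3 n = Xseq n.+1 - Xseq n,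
   Jac3 n.+3 - 4 * Jac3 n.+1 = Xseq n.+2 - Xseq n.+1 &
   Jac3 n.+4 - 4 * Jac3 n.+2 = Xseq n.+3 - Xseq n.+2] by case: (H n).
elim => [|m [h0 h1 h2]]; first by rewrite /Xseq.
have E1 : Jac3 m.+4.+1 = Jac3 m.+4 + Jac3 m.+3 + 2 * Jac3 m.+2 by [].
have E2 : Jac3 m.+3 = Jac3 m.+2 + Jac3 m.+1 + 2 * Jac3 m by [].
split; [exact: h1 | exact: h2 |].
have X4 : Xseq m.+4 = Xseq m.+1 by exact: X3.
rewrite E1 X4 X3.
rewrite X3 in h2.
move: (Xcase m) h0 h1 h2 => [[-> -> ->]|[[-> -> ->]|[-> -> ->]]]; lia.
Qed.

Lemma Krel n : Kac3 n.+2 - 4 * Kac3 n = -3 * Xseq n - 9 * Xseq n.+1.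
Proof.
suff H : forall n, [/\ Kac3 n.+2 - 4 * Kac3 n = -3 * Xseq n - 9 * Xseq n.+1,
   Kac3 n.+3 - 4 * Kac3 n.+1 = -3 * Xseq n.+1 - 9 * Xseq n.+2 &
   Kac3 n.+4 - 4 * Kac3 n.+2 = -3 * Xseq n.+2 - 9 * Xseq n.+3] by case: (H n).
elim => [|m [h0 h1 h2]]; first by rewrite /Xseq.
have E1 : Kac3 m.+4.+1 = Kac3 m.+4 + Kac3 m.+3 + 2 * Kac3 m.+2 by [].
have E2 : Kac3 m.+3 = Kac3 m.+2 + Kac3 m.+1 + 2 * Kac3 m by [].
split; [exact: h1 | exact: h2 |].
have X4 : Xseq m.+4 = Xseq m.+1 by exact: X3.
rewrite E1 X4 X3.
rewrite X3 in h2.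
move: (Xcase m) h0 h1 h2 => [[-> -> ->]|[[-> -> ->]|[-> -> ->]]]; lia.
Qed.

Lemma JR (R : realType) k : (Jac3 k.+2)%:~R = 4 * (Jac3 k)%:~R + (Xseq k.+1)%:~R - (Xseq k)%:~R :> R.
Proof.
have h := Jrel k.
have -> : Jac3 k.+2 = 4 * Jac3 k + Xseq k.+1 - Xseq k by lia.
by rewrite !rmorphB !rmorphD !rmorphM.
Qed.

Lemma KR (R : realType) k : (Kac3 k.+2)%:~R = 4 * (Kac3 k)%:~R - 3 * (Xseq k)%:~R - 9 * (Xseq k.+1)%:~R :> R.
Proof.
have h := Krel k.
have -> : Kac3 k.+2 = 4 * Kac3 k - 3 * Xseq k - 9 * Xseq k.+1 by lia.
by rewrite !rmorphB !rmorphM.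
Qed.

Theorem theorem4p3 (R : realType) (l1 l2 l3 : R) (n : nat) :
  gqsub (JG l1 l2 l3 n.+2) (gqscale 4 (JG l1 l2 l3 n)) =
    gqscale (- (1 / 7))
      (gqadd (gqscale (Xseq n)%:~R (gqadd (gqscale 5 gqA) gqB))
             (gqscale (Xseq n.+1)%:~R (gqadd gqA (gqscale (-4) gqB))))
  /\
  gqsub (KG l1 l2 l3 n.+2) (gqscale 4 (KG l1 l2 l3 n)) =
    gqsub (gqscale (- (Xseq n)%:~R) (gqadd (gqscale 5 gqC) gqD))
          (gqscale (Xseq n.+1)%:~R (gqadd gqC (gqscale (-4) gqD))).
Proof.
rewrite /gqsub /gqadd /gqscale /JG /KG /gqA /gqB /gqC /gqD /gqreal /e1 /e2 /e3 /=.
rewrite (JR R n.+3) (JR R n.+2) (JR R n.+1) (JR R n).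
rewrite (KR R n.+3) (KR R n.+2) (KR R n.+1) (KR R n).
have X4 : Xseq n.+4 = Xseq n.+1 by exact: X3.
rewrite X4 X3.
case: (Xcase n) => [[-> -> ->]|[[-> -> ->]|[-> -> ->]]]; split; congr mkGQ; lra.
Qed.
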